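(* Let \[0 \to A \xrightarrow{f} B \xrightarrow{g} C \to 0\] be a sequence of Hausdorff topological abelian groups and continuous homomorphisms which is exact as a sequence of abelian groups. Suppose that $f$ is a closed map and that for every compact subset $K \subseteq C$ there is a compact subset $B' \subseteq B$ with $g(B') \supseteq K$. Then the induced sequence of condensed abelian groups \[0 \to \underline{A} \to \underline{B} \to \underline{C} \to 0\] is exact.
   Context: An extremally disconnected set is a projective object in the category of compact Hausdorff spaces. A condensed set (resp. condensed abelian group) is a functor $T$ from the opposite of the category of extremally disconnected sets to sets (resp. abelian groups) with $T(\emptyset)=*$, $T(S_1\sqcup S_2)=T(S_1)\times T(S_2)$, and which is the left Kan extension of its restriction to $\kappa$-small extremally disconnected sets for some uncountable strong limit cardinal $\kappa$. For a T1 topological space (resp. topological abelian group) $X$, its condensation $\underline{X}$ is the condensed set (resp. condensed abelian group) $S \mapsto C(S,X)$, the continuous maps from $S$ to $X$. In condensed abelian groups, kernels and cokernels are computed sectionwise, so a sequence is exact iff it is exact after evaluation at every extremally disconnected $S$. *)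

(* Defs.v *)
From HB Require Import structures.
From mathcomp Require Import all_boot all_order all_algebra.
From mathcomp Require Import all_classical all_reals all_analysis.
Set Implicit Arguments. Unset Strict Implicit. Unset Printing Implicit Defensive.
Import GRing.Theory.
Local Open Scope classical_set_scope.
Local Open Scope ring_scope.

Definition compact_hausdorff (X : topologicalType) : Prop :=
  compact [set: X] /\ hausdorff_space X.

(* Extremally disconnected set := projective object in the category of
   compact Hausdorff spaces (and continuous maps): it is compact Hausdorff,
   and every continuous map into Y lifts along every continuous surjection
   X ->> Y of compact Hausdorff spaces. *)
Definition extremally_disconnected (S : topologicalType) : Prop :=
  compact_hausdorff S /\
  forall (X Y : topologicalType), compact_hausdorff X -> compact_hausdorff Y ->
  forall (p : X -> Y), continuous p -> (forall y : Y, exists x : X, p x = y) ->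
  forall (h : S -> Y), continuous h ->
  exists l : S -> X, continuous l /\ p \o l = h.

Definition closed_map (X Y : topologicalType) (f : X -> Y) : Prop :=
  forall D : set X, closed D -> closed (f @` D).

Definition short_exact (A B C : zmodType) (f : A -> B) (g : B -> C) : Prop :=
  [/\ injective f,
      (forall b : B, g b = 0 <-> exists a : A, f a = b)
    & (forall c : C, exists b : B, g b = c)].

(* Evaluation of 0 -> A(_) -> B(_) -> C(_) -> 0 (condensations,
   S |-> C(S, X)) at S, written out: exactness of the sequence of abelian
   groups 0 -> C(S,A) -> C(S,B) -> C(S,C) -> 0, maps given by postcomposition. *)
Definition exact_at (S : topologicalType) (A B C : topologicalZmodType)
  (f : A -> B) (g : B -> C) : Prop :=
  [/\ (forall u v : S -> A, continuous u -> continuous v ->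
         f \o u = f \o v -> u = v),
      (forall v : S -> B, continuous v ->
         (g \o v = (fun _ => 0) <->
          exists u : S -> A, continuous u /\ f \o u = v))
    & (forall w : S -> C, continuous w ->
         exists v : S -> B, continuous v /\ g \o v = w)].

Definition condensed_short_exact (A B C : topologicalZmodType)
  (f : A -> B) (g : B -> C) : Prop :=
  forall S : topologicalType, extremally_disconnected S -> exact_at S f g.

(* Main.v *)
Require Import Defs.
From HB Require Import structures.
From mathcomp Require Import all_boot all_order all_algebra.
From mathcomp Require Import all_classical all_reals all_analysis.
Import GRing.Theory.
Local Open Scope classical_set_scope.
Local Open Scope ring_scope.

Lemma sv_cont (T : topologicalType) (A : set T) :
  continuous (set_val : set_type A -> T).
Proof. exact: initial_continuous. Qed.

Lemma sv_cont_into (X T : topologicalType) (A : set T) (h : X -> set_type A) :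
  continuous (set_val \o h) -> continuous h.
Proof. exact: (@continuous_comp_initial _ X T set_val h). Qed.

Lemma sv_open (T : topologicalType) (A : set T) (P : set T) :
  open P -> open (set_val @^-1` P : set (set_type A)).
Proof.
move=> oP.
have h : continuous (set_val : set_type A -> T) by exact: initial_continuous.
exact: ((continuousP (set_val : set_type A -> T)).1 h P oP).
Qed.

Lemma sv_compact (T : topologicalType) (A : set T) :
  compact A -> compact [set: set_type A].
Proof.
move=> cA.
have [A0|/set0P [a Aa]] := eqVneq A set0.
  have -> : [set: set_type A] = set0.
    rewrite predeqE => -[x Ax]; split => // _; have : A x by exact: set_mem Ax.
    by move=> Ax'; exfalso; rewrite A0 in Ax'.
  exact: compact0.
pose a' : set_type A := exist _ a (mem_set Aa).
pose F : T -> set_type A := valL_ a' id.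
have sF : sigL A F = id by apply: valLK.
have cF : {within A, continuous F}.
  apply/(subspace_sigL_continuousP A F); rewrite sF; by move=> x.
have := continuous_compact cF cA.
have -> : F @` A = setT.
  rewrite predeqE => x; split => // _; exists (set_val x); first exact: set_valP.
  by have := congr1 (fun k => k x) sF.
by [].
Qed.

Lemma sv_hausdorff (T : topologicalType) (A : set T) :
  hausdorff_space T -> hausdorff_space (set_type A).
Proof.
rewrite !open_hausdorff => hT x y xy.
have : set_val x != set_val y.
  by apply: contra xy => /eqP e; apply/eqP; apply: val_inj.
move=> /hT [[P Q]] /= [xP yQ] [oP oQ /eqP PQ].
exists (set_val @^-1` P, set_val @^-1` Q) => /=.
  by rewrite !inE; move: xP yQ; rewrite !inE.
split.
- exact: sv_open.
- exact: sv_open.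
apply/eqP; rewrite predeqE => z; split => // -[zP zQ].
by have : (P `&` Q) (set_val z) by []; rewrite PQ.
Qed.

Theorem mainTheorem1 (A B C : topologicalZmodType)
  (hA : hausdorff_space A) (hB : hausdorff_space B) (hC : hausdorff_space C)
  (f : {additive A -> B}) (g : {additive B -> C})
  (cf : continuous f) (cg : continuous g)
  (ex : short_exact f g)
  (fclosed : closed_map f)
  (glift : forall K : set C, compact K ->
     exists B' : set B, compact B' /\ K `<=` g @` B') :
  condensed_short_exact f g.
Proof.
case: ex => finj gker gsurj.
move=> S [[cS hS] lift]; split.
- move=> u v _ _ e; apply/funext => s; apply: finj.
  exact: (congr1 (fun k => k s) e).
- move=> v cv; split.
  + move=> gv0.
    have H : forall s, exists a, f a = v s.
      by move=> s; apply/(gker (v s)).1; exact: (congr1 (fun k => k s) gv0).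
    have [u hu] := choice H.
    exists u; split; last by apply/funext => s; exact: hu.
    apply/continuous_closedP => D cD.
    have -> : u @^-1` D = v @^-1` (f @` D).
      rewrite predeqE => s; split => /=.
        by move=> Du; exists (u s).
      by case=> a Da fa; rewrite -(finj _ _ (etrans fa (esym (hu s)))).
    by move: cv => /continuous_closedP; apply; apply: fclosed.
  + case=> u [cu <-]; apply/funext => s /=; apply/(gker _).2; by exists (u s).
- move=> w cw.
  pose K := w @` [set: S].
  have cK : compact K := continuous_compact (continuous_subspaceT cw) cS.
  have [B' [cB' KB']] := glift K cK.
  pose D := B' `&` g @^-1` K.
  have cD : compact D.
    apply: compact_closedI => //.
    by move: cg => /continuous_closedP; apply; apply: compact_closed.
  pose p : set_type D -> set_type K :=
    fun x => exist _ (g (set_val x)) (mem_set (set_valP x).2).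
  pose h : S -> set_type K := fun s => exist _ (w s) (mem_set (imageT w s)).
  have cp : continuous p.
    apply: sv_cont_into => x.
    by apply: (@continuous_comp _ _ _ set_val g); [exact: sv_cont | exact: cg].
  have ch : continuous h.
    by apply: sv_cont_into => x; exact: cw.
  have psurj : forall y, exists x, p x = y.
    move=> y; have [b B'b gb] := KB' _ (set_valP y).
    have Db : D b by split => //=; rewrite gb; exact: set_valP.
    exists (exist _ b (mem_set Db)); apply: val_inj => /=; exact: gb.
  have [l [cl plh]] := lift (set_type D) (set_type K) (conj (@sv_compact _ D cD) (@sv_hausdorff _ D hB))
    (conj (@sv_compact _ K cK) (@sv_hausdorff _ K hC)) p cp psurj h ch.
  exists (fun s => set_val (l s)); split.
    by move=> s; apply: (@continuous_comp _ _ _ l set_val); [exact: cl | exact: sv_cont].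
  apply/funext => s /=.
  exact: (congr1 (fun k => set_val (k s)) plh).
Qed.
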